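(* Let $A$ be a finite set with $N\ge 2$ elements and let $(v_{xy})$ be a Llull matrix on $A$ with CLC structure that is not identically zero. Let $\rho_x=\frac{1}{N-1}\sum_{y\neq x}v_{xy}$ be its mean preference scores and $(\varphi_x)_{x\in A}$ its strengths. Then for all $x,y\in A$: (a) if $\varphi_x>\varphi_y$ then $\rho_x>\rho_y$; (b) if $\rho_x>\rho_y$ then either $\varphi_x>\varphi_y$ or $\varphi_x=\varphi_y=0$.
   Context: A Llull matrix on a finite set $A$ is an assignment to each ordered pair of distinct elements $x\neq y$ of $A$ of a number $v_{xy}\in[0,1]$ such that $v_{xy}+v_{yx}\le 1$. Turnouts: $t_{xy}=v_{xy}+v_{yx}$; margins: $m_{xy}=v_{xy}-v_{yx}$. The matrix has CLC structure if there is a total order $\xi$ on $A$ such that, writing $x<_\xi y$ when $x$ precedes $y$ and $x'$ for the immediate successor of $x$ in $\xi$ (when it exists): (i) $v_{xy}\ge v_{yx}$ whenever $x<_\xi y$; (ii) $v_{xz}=\max(v_{xy},v_{yz})$ whenever $x<_\xi y<_\xi z$; (iii) $v_{zx}=\min(v_{zy},v_{yx})$ whenever $x<_\xi y<_\xi z$; (iv) $0\le t_{xz}-t_{x'z}\le m_{xx'}$ whenever $x'$ exists and $z\notin\{x,x'\}$. Strengths (Zermelo's method): let $\Phi=\{\varphi\in\mathbb{R}^A:\varphi_x>0\ \forall x,\ \sum_x\varphi_x=1\}$ and $F(\varphi)=\prod_{\{x,y\}}\frac{\varphi_x^{v_{xy}}\varphi_y^{v_{yx}}}{(\varphi_x+\varphi_y)^{t_{xy}}}$,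 the product over unordered pairs of distinct elements of $A$. A maximizing sequence is a sequence $\varphi^n\in\Phi$ with $F(\varphi^n)\to\sup_\Phi F$. When the matrix has a top dominant irreducible component (which is the case for non-vanishing Llull matrices with CLC structure), there is a unique $\varphi$ in the closure $\overline{\Phi}$ such that every maximizing sequence converges to $\varphi$; this $\varphi$ is the vector of strengths. (Here irreducible components are the classes of $x\sim y$ iff $x=y$ or both indirect scores $\hat v_{xy},\hat v_{yx}$ are positive, where $\hat v_{xy}$ is the maximum over paths $x=x_0,\dots,x_n=y$ of $\min_i v_{x_ix_{i+1}}$; $x$ dominates $y$ iff $\hat v_{xy}>0=\hat v_{yx}$; a top dominant component dominates all other components.) *)

(* Defs.v *)
From mathcomp Require Import all_boot all_order all_algebra.
From mathcomp Require Import all_classical all_reals all_analysis.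
Set Implicit Arguments. Unset Strict Implicit. Unset Printing Implicit Defensive.
Import Order.TTheory GRing.Theory Num.Theory.
Local Open Scope classical_set_scope.
Local Open Scope ring_scope.

Section Llull.
Variables (R : realType) (A : finType).

(* A matrix is a function v : A -> A -> R; diagonal entries are irrelevant. *)
Definition llull (v : A -> A -> R) : Prop :=
  forall x y, x != y -> 0 <= v x y /\ v x y <= 1 /\ v x y + v y x <= 1.

Definition turnout (v : A -> A -> R) x y := v x y + v y x.
Definition margin (v : A -> A -> R) x y := v x y - v y x.

(* The total order xi is given by a ranking rk : A -> 'I_#|A| that is
   injective (hence bijective); x <_xi y iff rk x < rk y, and x' is the
   immediate successor of x iff rk x' = (rk x).+1. *)
Definition clc_order (v : A -> A -> R) (rk : A -> 'I_#|A|) : Prop :=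
  injective rk /\
  (forall x y, (rk x < rk y)%N -> v y x <= v x y) /\
  (forall x y z, (rk x < rk y)%N -> (rk y < rk z)%N ->
      v x z = Num.max (v x y) (v y z)) /\
  (forall x y z, (rk x < rk y)%N -> (rk y < rk z)%N ->
      v z x = Num.min (v z y) (v y x)) /\
  (forall x x' z, nat_of_ord (rk x') = (rk x).+1 -> z != x -> z != x' ->
      0 <= turnout v x z - turnout v x' z /\
      turnout v x z - turnout v x' z <= margin v x x').

Definition has_CLC (v : A -> A -> R) : Prop := exists rk, clc_order v rk.

Definition nonvanishing (v : A -> A -> R) : Prop :=
  exists x y, x != y /\ v x y != 0.

Definition rho (v : A -> A -> R) (x : A) : R :=
  (#|A|.-1%:R)^-1 * \sum_(y | y != x) v x y.

Definition Phi : set (A -> R) :=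
  [set phi | (forall x, 0 < phi x) /\ \sum_x phi x = 1].

(* Zermelo's objective, as a product over unordered pairs {x,y}
   (each unordered pair is enumerated once via enum_rank). *)
Definition Fz (v : A -> A -> R) (phi : A -> R) : R :=
  \prod_(x : A) \prod_(y : A | (enum_rank x < enum_rank y)%N)
     ((phi x `^ v x y) * (phi y `^ v y x) / ((phi x + phi y) `^ turnout v x y)).

Definition maximizing_seq (v : A -> A -> R) (phis : nat -> A -> R) : Prop :=
  (forall n, Phi (phis n)) /\
  (Fz v (phis n) @[n --> \oo] --> (sup [set Fz v phi | phi in Phi] : R^o)).

Definition strengths (v : A -> A -> R) (phi : A -> R) : Prop :=
  forall phis, maximizing_seq v phis ->
    forall x, phis n x @[n --> \oo] --> (phi x : R^o).

End Llull.

(* Main.v *)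
Require Import Defs.
From mathcomp Require Import all_boot all_order all_algebra.
From mathcomp Require Import all_classical all_reals all_analysis.
From mathcomp Require Import ring lra perm.
Import Order.TTheory GRing.Theory Num.Theory.
Local Open Scope classical_set_scope.
Local Open Scope ring_scope.
Set Implicit Arguments. Unset Strict Implicit. Unset Printing Implicit Defensive.

Section Aux.
Variable R : realType.
Implicit Types x y z w : R.

Lemma ln_le_sub1 x : 0 < x -> ln x <= x - 1.
Proof.
move=> x0; have := @le_ln1Dx R (x - 1).
have -> : 1 + (x - 1) = x by ring.
apply; lra.
Qed.

Lemma ln_ge_1V x : 0 < x -> 1 - x^-1 <= ln x.
Proof.
move=> x0; have := @ln_le_sub1 x^-1; rewrite invr_gt0 => /(_ x0).
rewrite lnV ?posrE //; lra.
Qed.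

Lemma aux_max_le y : y <= Num.max 0 y.
Proof. by rewrite le_max lexx orbT. Qed.

Lemma aux_max_ge0 y : 0 <= Num.max 0 y.
Proof. by rewrite le_max lexx. Qed.

Lemma aux_pair (al be a1 b1 : R) : 0 < al -> 0 < be -> 0 < a1 -> 0 < b1 ->
  ln (a1 + b1) - ln (al + be) <= Num.max 0 ((a1 + b1) / (al + be) - 1).
Proof.
move=> ha hb h1 h2; rewrite -ln_div ?posrE ?addr_gt0 //.
apply: le_trans (aux_max_le _); apply: ln_le_sub1; apply: divr_gt0; exact: addr_gt0.
Qed.

Lemma aux_P (al be a1 b1 w : R) : 0 < al -> 0 < be -> 0 < a1 -> 0 < b1 -> 0 < w ->
  a1 * b1 = al * be ->
  ln (a1 + w) - ln (al + w) + (ln (b1 + w) - ln (be + w)) <=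
  Num.max 0 ((a1 + b1) / (al + be) - 1).
Proof.
move=> ha hb h1 h2 hw e.
have -> : ln (a1 + w) - ln (al + w) + (ln (b1 + w) - ln (be + w)) =
    ln (((a1 + w) * (b1 + w)) / ((al + w) * (be + w))).
  rewrite ln_div ?posrE ?mulr_gt0 ?addr_gt0 // !lnM ?posrE ?addr_gt0 //; lra.
set den := (al + w) * (be + w).
have d0 : 0 < den by rewrite mulr_gt0 ?addr_gt0.
have P0 : 0 < ((a1 + w) * (b1 + w)) / den by rewrite divr_gt0 ?mulr_gt0 ?addr_gt0.
apply: le_trans (ln_le_sub1 P0) _.
have -> : (a1 + w) * (b1 + w) / den - 1 = w * (a1 + b1 - al - be) / den.
  have E2 : (a1 + w) * (b1 + w) - den = w * (a1 + b1 - al - be) by rewrite /den; nra.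
  rewrite -E2; field; exact: lt0r_neq0.
have [K0|K0] := leP (a1 + b1 - al - be) 0.
  apply: le_trans (aux_max_ge0 _); apply: mulr_le0_ge0; last by rewrite invr_ge0 ltW.
  by apply: mulr_ge0_le0 => //; rewrite ltW.
apply: le_trans (aux_max_le _).
have -> : (a1 + b1) / (al + be) - 1 = (a1 + b1 - al - be) / (al + be).
  field; apply: lt0r_neq0; exact: addr_gt0.
rewrite -subr_ge0.
have -> : (a1 + b1 - al - be) / (al + be) - w * (a1 + b1 - al - be) / den =
  (a1 + b1 - al - be) * (al * be + w * w) / ((al + be) * den).
  rewrite /den; field; apply/and3P; split; apply: lt0r_neq0; exact: addr_gt0.
apply: divr_ge0; last by rewrite ltW // mulr_gt0 ?addr_gt0.
by apply: mulr_ge0; [rewrite ltW | rewrite addr_ge0 ?mulr_ge0 // ltW].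
Qed.

Lemma aux_A1 (al w mu : R) : 0 < al -> 0 < w -> 1 <= mu ->
  0 <= ln (mu * al + w) - ln (al + w) <= ln mu.
Proof.
move=> ha hw hm; have m0 : 0 < mu by apply: lt_le_trans hm.
apply/andP; split.
  rewrite subr_ge0 ler_ln ?posrE ?addr_gt0 ?mulr_gt0 // lerD2r; nra.
rewrite lerBlDr -lnM ?posrE ?addr_gt0 // ler_ln ?posrE ?addr_gt0 ?mulr_gt0 //; nra.
Qed.

Lemma aux_final (al be mu C : R) : 0 < al -> 0 < be -> 1 < mu -> 0 < C ->
  al <= mu * be ->
  C * Num.max 0 ((mu * al + be / mu) / (al + be) - 1) <= C * (mu - 1) * ln mu.
Proof.
move=> ha hb hm hC hab; have m0 : 0 < mu by apply: lt_trans hm.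
apply: le_trans (_ : C * (mu - 1) * (1 - mu^-1) <= _); last first.
  apply: ler_wpM2l; first by apply: mulr_ge0; rewrite ?subr_ge0 ltW.
  exact: ln_ge_1V.
rewrite -mulrA; apply: ler_wpM2l; first exact: ltW.
rewrite ge_max; apply/andP; split.
  have : mu^-1 < 1 by rewrite invf_lt1.
  move=> ?; nra.
rewrite lerBlDr ler_pdivrMr ?addr_gt0 //.
set u := mu^-1; have mu1 : mu * u = 1 by rewrite /u mulfV // gt_eqF.
have u0 : 0 < u by rewrite /u invr_gt0.
have u1 : u < 1 by rewrite /u invf_lt1.
have -> : be / mu = u * be by rewrite /u mulrC.
have h1 : 0 <= (mu * be - al) * (1 - u) by apply: mulr_ge0; rewrite subr_ge0 // ltW.
have h2 : mu * u * be = be by rewrite mu1 mul1r.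
have h3 : mu * u * al = al by rewrite mu1 mul1r.
nra.
Qed.
End Aux.

Section An.
Variable R : realType.

Lemma lim_ge0 (u : nat -> R) (l : R) : (forall n, 0 <= u n) ->
  u n @[n --> \oo] --> (l : R^o) -> 0 <= l.
Proof.
move=> u0 ul; rewrite leNgt; apply/negP => l0.
have := @cvgr_lt R nat _ _ u l ul 0 l0. case => N _ /(_ N (leqnn N)) /=.
by rewrite ltNge u0.
Qed.

Lemma lim_uniq (u : nat -> R) (a b : R) :
  u n @[n --> \oo] --> (a : R^o) -> u n @[n --> \oo] --> (b : R^o) -> a = b.
Proof. move=> ha hb; exact: (cvg_unique (@norm_hausdorff _ R^o) ha hb). Qed.

End An.

Section Main.
Variables (R : realType) (A : finType) (v : A -> A -> R).

Definition tau (p : A -> R) x y :=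
  v x y * ln (p x) + v y x * ln (p y) - turnout v x y * ln (p x + p y).
Definition hS (p : A -> R) x y := if x == y then 0 else tau p x y.
Definition S (p : A -> R) := \sum_x \sum_y hS p x y.

Lemma tauC p x y : tau p x y = tau p y x.
Proof. by rewrite /tau /turnout (addrC (p x)) (addrC (v x y)); lra. Qed.

Lemma sym_sum (f : A -> A -> R) : (forall x y, f x y = f y x) ->
  \sum_x \sum_y (if x == y then 0 else f x y) =
  2 * \sum_x \sum_(y | (enum_rank x < enum_rank y)%N) f x y.
Proof.
move=> fC.
have E : forall x, \sum_y (if x == y then 0 else f x y) =
  \sum_(y | (enum_rank x < enum_rank y)%N) f x y +
  \sum_(y | (enum_rank y < enum_rank x)%N) f x y.
  move=> x; rewrite !(big_mkcond (fun y => (_ < _)%N)) -big_split /=.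
  apply: eq_bigr => y _.
  case: (ltngtP (enum_rank x) (enum_rank y)) => H.
  - have -> : (x == y) = false.
      by apply/negbTE/eqP => exy; move: H; rewrite exy ltnn.
    by rewrite addr0.
  - have -> : (x == y) = false.
      by apply/negbTE/eqP => exy; move: H; rewrite exy ltnn.
    by rewrite add0r.
  - have -> : x = y by apply: enum_rank_inj; apply: val_inj.
    by rewrite eqxx addr0.
rewrite (eq_bigr _ (fun x _ => E x)) big_split /=.
rewrite [X in _ + X = _](exchange_big_dep xpredT) //=.
rewrite [X in _ + X = _](eq_bigr (fun y => \sum_(x | (enum_rank y < enum_rank x)%N) f y x)); last first.
  by move=> y _; apply: eq_bigr => x _; rewrite fC.
by rewrite mulr2n mulrDl mul1r.
Qed.

Lemma powR_exp (a b : R) : 0 < a -> a `^ b = expR (b * ln a).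
Proof. by move=> a0; rewrite /powR gt_eqF. Qed.

Lemma Fz_exp p : (forall x, 0 < p x) -> Fz v p = expR (S p / 2).
Proof.
move=> pP.
have -> : S p / 2 = \sum_x \sum_(y | (enum_rank x < enum_rank y)%N) tau p x y.
  rewrite /S /hS sym_sum; last exact: tauC.
  by rewrite mulrC mulrA mulVf ?mul1r // pnatr_eq0.
rewrite /Fz (big_morph expR (@expRD R) (@expR0 R)).
apply: eq_bigr => x _; rewrite (big_morph expR (@expRD R) (@expR0 R)).
apply: eq_bigr => y _.
rewrite !powR_exp ?addr_gt0 // /tau. idtac.
rewrite -expRN -!expRD; congr expR; rewrite /turnout; lra.
Qed.

Lemma S_scale p c : 0 < c -> (forall x, 0 < p x) ->
  S (fun x => c * p x) = S p.
Proof.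
move=> c0 pP; apply: eq_bigr => x _; apply: eq_bigr => y _.
rewrite /hS; case: eqP => // _; rewrite /tau -mulrDr !lnM ?posrE ?addr_gt0 //.
rewrite /turnout; lra.
Qed.

Lemma S_le0 p : llull v -> (forall x, 0 < p x) -> S p <= 0.
Proof.
move=> hv pP; apply: sumr_le0 => x _; apply: sumr_le0 => y _.
rewrite /hS; case: eqP => // /eqP xy.
have [h1 _] := hv x y xy.
have yx : y != x by rewrite eq_sym.
have [h2 _] := hv y x yx.
have l1 : ln (p x) <= ln (p x + p y) by rewrite ler_ln ?posrE ?addr_gt0 // lerDl ltW.
have l2 : ln (p y) <= ln (p x + p y) by rewrite ler_ln ?posrE ?addr_gt0 // lerDr ltW.
rewrite /tau /turnout; nra.
Qed.

Lemma two_point (f : A -> A -> R) a b : a != b ->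
  (forall x, f x x = 0) -> (forall x y, f x y = f y x) ->
  (forall x y, x != a -> x != b -> y != a -> y != b -> f x y = 0) ->
  \sum_x \sum_y f x y =
  2 * f a b + 2 * \sum_(z | (z != a) && (z != b)) (f a z + f b z).
Proof.
move=> ab f0 fC fz.
have row : forall x, \sum_y f x y =
    f x a + f x b + \sum_(z | (z != a) && (z != b)) f x z.
  move=> x; rewrite (bigD1 a) //= (bigD1 b) 1?eq_sym //= addrA.
  by congr (_ + _); apply: eq_bigl => z; rewrite andbC.
rewrite (bigD1 a) //= [X in _ + X](bigD1 b) /=; last by rewrite eq_sym.
have -> : \sum_(i | (i != a) && (i != b)) \sum_y f i y =
          \sum_(i | (i != a) && (i != b)) (f i a + f i b).
  apply: eq_bigr => x /andP[xa xb]; rewrite row big1 ?addr0 //.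
  by move=> z /andP[za zb]; apply: fz.
rewrite !row f0 fC f0 !add0r addr0 !big_split /=.
have -> : \sum_(i | (i != a) && (i != b)) f i a = \sum_(i | (i != a) && (i != b)) f a i.
  by apply: eq_bigr => *; rewrite fC.
have -> : \sum_(i | (i != a) && (i != b)) f i b = \sum_(i | (i != a) && (i != b)) f b i.
  by apply: eq_bigr => *; rewrite fC.
lra.
Qed.

Lemma S_diff p q a b : a != b -> (forall x, x != a -> x != b -> q x = p x) ->
  S q - S p = 2 * (tau q a b - tau p a b) +
    2 * \sum_(z | (z != a) && (z != b))
          ((tau q a z - tau p a z) + (tau q b z - tau p b z)).
Proof.
move=> ab qp.
have -> : S q - S p = \sum_x \sum_y (hS q x y - hS p x y).
  rewrite /S -sumrB. apply: eq_bigr => x _. rewrite -sumrB. reflexivity.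
rewrite (two_point ab).
- rewrite /hS (negbTE ab); congr (_ + _ * _); apply: eq_bigr => z /andP[za zb].
  by rewrite eq_sym (negbTE za) eq_sym (negbTE zb).
- by move=> x; rewrite /hS eqxx subrr.
- by move=> x y; rewrite /hS eq_sym; case: eqP => // _; rewrite (tauC q x y) (tauC p x y).
- move=> x y xa xb ya yb; rewrite /hS; case: eqP => _; first by rewrite subrr.
  by rewrite /tau (qp x) ?(qp y) ?subrr.
Qed.

Definition swp a b (p : A -> R) := fun x => p (tperm a b x).

Lemma swp_pair p a b : a != b ->
  tau (swp a b p) a b - tau p a b = (v a b - v b a) * (ln (p b) - ln (p a)).
Proof.
move=> ab; rewrite /tau /swp tpermL tpermR /turnout (addrC (p b)); ring.
Qed.

Lemma swp_z p a b z : z != a -> z != b ->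
  (tau (swp a b p) a z - tau p a z) + (tau (swp a b p) b z - tau p b z) =
  (v a z - v b z) * (ln (p b) - ln (p a)) -
  (turnout v a z - turnout v b z) * (ln (p b + p z) - ln (p a + p z)).
Proof.
move=> za zb; rewrite /tau /swp tpermL tpermR tpermD 1?eq_sym //.
rewrite /turnout; ring.
Qed.

Lemma Phi_swp p a b : Phi p -> Phi (swp a b p).
Proof.
move=> [pP ps]; split; first by move=> x; apply: pP.
rewrite -ps /swp (reindex_inj (@perm_inj _ (tperm a b))) /=.
by apply: eq_bigr => x _; rewrite tpermK.
Qed.

Lemma consec_ne rk a a' : clc_order v rk -> nat_of_ord (rk a') = (rk a).+1 -> a != a'.
Proof.
move=> _ h; apply/eqP => e; move: h; rewrite e => /eqP; by rewrite -[X in X == _]addn0 -addn1 eqn_add2l.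
Qed.

Lemma consec_facts rk a a' z : clc_order v rk -> nat_of_ord (rk a') = (rk a).+1 ->
  z != a -> z != a' -> v a' z <= v a z /\ v z a <= v z a'.
Proof.
move=> [inj [h1 [h2 [h3 h4]]]] ha za za'.
case: (ltngtP (rk z) (rk a)) => H.
- have H' : (rk a < rk a')%N by rewrite ha.
  split; first by rewrite (h3 z a a') // ge_min lexx orbT.
  by rewrite (h2 z a a') // le_max lexx.
- have H' : (rk a' < rk z)%N.
    rewrite ltn_neqAle ha H andbT; apply/negP => /eqP e.
    have ez : z = a' by apply: inj; apply: val_inj; rewrite /= -e ha.
    by rewrite ez eqxx in za'.
  have H0 : (rk a < rk a')%N by rewrite ha.
  split; first by rewrite (h2 a a' z) // le_max lexx orbT.
  by rewrite (h3 a a' z) // ge_min lexx.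
- have ez : z = a by apply: inj; apply: val_inj.
  by rewrite ez eqxx in za.
Qed.

Lemma ln_le_shift (x y w : R) : 0 < x -> x <= y -> 0 < w ->
  0 <= ln (y + w) - ln (x + w) <= ln y - ln x.
Proof.
move=> x0 xy w0; have y0 : 0 < y by apply: lt_le_trans xy.
apply/andP; split.
  by rewrite subr_ge0 ler_ln ?posrE ?addr_gt0 // lerD2r.
rewrite lerBlDr addrAC lerBrDr -!lnM ?posrE ?addr_gt0 //.
rewrite ler_ln ?posrE ?mulr_gt0 ?addr_gt0 //; nra.
Qed.

Lemma swp_ge rk a a' p : llull v -> clc_order v rk ->
  nat_of_ord (rk a') = (rk a).+1 -> (forall x, 0 < p x) -> p a < p a' ->
  S p <= S (swp a a' p).
Proof.
move=> hv hc ha pP lt; have aa' := consec_ne hc ha.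
rewrite -subr_ge0 (S_diff aa'); last by move=> x xa xa'; rewrite /swp tpermD // eq_sym.
have L0 : 0 <= ln (p a') - ln (p a).
  by rewrite subr_ge0 ler_ln ?posrE // ltW.
have m0 : 0 <= v a a' - v a' a.
  have [_ [h1 _]] := hc; rewrite subr_ge0; apply: h1; by rewrite ha.
apply: addr_ge0; rewrite ?pmulr_rge0 // ?swp_pair //; first exact: mulr_ge0.
apply: sumr_ge0 => z /andP[za za']; rewrite swp_z // ?(eq_sym z) //.
have [f1 f2] := consec_facts hc ha za za'.
have /andP[D0 DL] := ln_le_shift (pP a) (ltW lt) (pP z).
move: D0 DL; rewrite /turnout.
set L := ln (p a') - ln (p a); set D := ln (p a' + p z) - ln (p a + p z).
move=> D0 DL; nra.
Qed.

Lemma swp_eq rk a a' p : clc_order v rk -> nat_of_ord (rk a') = (rk a).+1 ->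
  v a a' = v a' a ->
  (forall z, z != a -> z != a' -> v a z = v a' z /\ v z a = v z a') ->
  S (swp a a' p) = S p.
Proof.
move=> hc ha e1 e2; have aa' := consec_ne hc ha.
apply/eqP; rewrite -subr_eq0; apply/eqP.
rewrite (S_diff aa'); last by move=> x xa xa'; rewrite /swp tpermD // eq_sym.
rewrite swp_pair // e1 subrr mul0r mulr0 add0r big1 ?mulr0 //.
move=> z /andP[za za']; rewrite swp_z // ?(eq_sym z) //.
rewrite /turnout; have [-> ->] := e2 z za za'; ring.
Qed.

Definition shf a b (mu : R) (p : A -> R) :=
  fun x => if x == a then mu * p a else if x == b then p b / mu else p x.

Definition kap a b := (v a b - v b a) +
  \sum_(z | (z != a) && (z != b)) ((v a z - v b z) - (turnout v a z - turnout v b z)).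

Lemma shf_pair a b mu p : a != b -> 0 < mu -> (forall x, 0 < p x) ->
  tau (shf a b mu p) a b - tau p a b = (v a b - v b a) * ln mu -
   turnout v a b * (ln (mu * p a + p b / mu) - ln (p a + p b)).
Proof.
move=> ab m0 pP; rewrite /tau /shf eqxx eq_sym (negbTE ab) eqxx.
rewrite lnM ?posrE // ln_div ?posrE //; ring.
Qed.

Lemma shf_z a b mu p z : a != b -> 0 < mu -> (forall x, 0 < p x) ->
  z != a -> z != b ->
  (tau (shf a b mu p) a z - tau p a z) + (tau (shf a b mu p) b z - tau p b z) =
  (v a z - v b z) * ln mu
  - turnout v a z * (ln (mu * p a + p z) - ln (p a + p z))
  - turnout v b z * (ln (p b / mu + p z) - ln (p b + p z)).
Proof.
move=> ab m0 pP za zb; rewrite /tau /shf (eq_sym b a) (negbTE ab) (negbTE za) (negbTE zb) !eqxx.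
rewrite lnM ?posrE // ln_div ?posrE //; ring.
Qed.

Lemma shf_ge rk a a' p : llull v -> clc_order v rk ->
  nat_of_ord (rk a') = (rk a).+1 -> (forall x, 0 < p x) -> 0 < kap a a' ->
  p a <= (1 + kap a a' / (#|A|.+1)%:R) * p a' ->
  S p <= S (shf a a' (1 + kap a a' / (#|A|.+1)%:R) p).
Proof.
move=> hv hc ha pP k0.
set C : R := (#|A|.+1)%:R; set k := kap a a'; set mu := 1 + k / C => hab.
have aa' := consec_ne hc ha.
have C0 : 0 < C by rewrite /C ltr0n.
have mu1 : 1 < mu by rewrite /mu ltrDl divr_gt0.
have m0 : 0 < mu by apply: lt_trans mu1.
have l0 : 0 <= ln mu by rewrite ln_ge0 // ltW.
have kE : k = C * (mu - 1) by rewrite /mu; field; rewrite gt_eqF.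
set X := Num.max 0 ((mu * p a + p a' / mu) / (p a + p a') - 1).
have X0 : 0 <= X by exact: aux_max_ge0.
have eprod : mu * p a * (p a' / mu) = p a * p a'.
  by field; rewrite gt_eqF.
have pa_pos : 0 < mu * p a by rewrite mulr_gt0.
have pb_pos : 0 < p a' / mu by rewrite divr_gt0.
have [_ [h1 [_ [_ h4]]]] := hc.
have Hpair : (v a a' - v a' a) * ln mu - X <= tau (shf a a' mu p) a a' - tau p a a'.
  rewrite shf_pair //.
  have Y := aux_pair (pP a) (pP a') pa_pos pb_pos; rewrite -/X in Y.
  have [t0 [t1 t2]] := hv a a' aa'.
  have a'a : a' != a by rewrite eq_sym.
  have [t3 _] := hv a' a a'a.
  move: Y; rewrite /turnout.
  set Yv := ln (mu * p a + p a' / mu) - ln (p a + p a') => Y; nra.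
have Hz : forall z, (z != a) && (z != a') ->
   ((v a z - v a' z) - (turnout v a z - turnout v a' z)) * ln mu - X <=
   (tau (shf a a' mu p) a z - tau p a z) + (tau (shf a a' mu p) a' z - tau p a' z).
  move=> z /andP[za za']; rewrite shf_z //.
  have /andP[A10 A1l] := aux_A1 (pP a) (pP z) (ltW mu1).
  have AP := aux_P (pP a) (pP a') pa_pos pb_pos (pP z) eprod; rewrite -/X in AP.
  have [e0 _] := h4 a a' z ha za za'.
  have a'z : a' != z by rewrite eq_sym.
  have [t0 [t1 t2]] := hv a' z a'z.
  have [t3 _] := hv z a' za'.
  move: A10 A1l AP e0; rewrite /turnout.
  set A1 := ln (mu * p a + p z) - ln (p a + p z).
  set A2 := ln (p a' / mu + p z) - ln (p a' + p z).
  move=> A10 A1l AP e0; nra.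
rewrite -subr_ge0 (S_diff aa'); last first.
  by move=> x xa xa'; rewrite /shf (negbTE xa) (negbTE xa').
have Hs : \sum_(z | (z != a) && (z != a'))
            (((v a z - v a' z) - (turnout v a z - turnout v a' z)) * ln mu - X)
   <= \sum_(z | (z != a) && (z != a'))
      ((tau (shf a a' mu p) a z - tau p a z) + (tau (shf a a' mu p) a' z - tau p a' z)).
  by apply: ler_sum => z; apply: Hz.
have HX : \sum_(z | (z != a) && (z != a')) X <= #|A|%:R * X.
  apply: le_trans (_ : \sum_z X <= _).
    rewrite [X in _ <= X](bigID (fun z => (z != a) && (z != a'))) /= lerDl.
    by apply: sumr_ge0.
  rewrite sumr_const mulr_natl; exact: lexx.
have Hfin := aux_final (pP a) (pP a') mu1 C0 hab; rewrite -/X -kE in Hfin.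
have Ek : \sum_(z | (z != a) && (z != a'))
            (((v a z - v a' z) - (turnout v a z - turnout v a' z)) * ln mu - X)
   = (k - (v a a' - v a' a)) * ln mu - \sum_(z | (z != a) && (z != a')) X.
  rewrite sumrB -mulr_suml /k /kap; congr (_ * _ - _); ring.
rewrite Ek in Hs.
have CE : C = #|A|%:R + 1 by rewrite /C -natr1.
rewrite CE in Hfin.
nra.
Qed.

Lemma Phi_pos (p : A -> R) : Phi p -> forall x, 0 < p x.
Proof. by case. Qed.

Lemma Fz_le1 (p : A -> R) : llull v -> Phi p -> Fz v p <= 1.
Proof.
move=> hv hp; rewrite Fz_exp; last exact: Phi_pos.
rewrite -expR0 ler_expR; apply: mulr_le0_ge0; first exact: S_le0 (Phi_pos hp).
by rewrite invr_ge0.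
Qed.

Lemma Fz_gt0 (p : A -> R) : Phi p -> 0 < Fz v p.
Proof. by move=> hp; rewrite Fz_exp ?expR_gt0 //; exact: Phi_pos. Qed.

Definition uni : A -> R := fun _ => (#|A|%:R)^-1.

Lemma Phi_uni : (0 < #|A|)%N -> Phi uni.
Proof.
move=> hA; split; first by move=> x; rewrite /uni invr_gt0 ltr0n.
rewrite /uni sumr_const; change ((#|A|%:R)^-1 *+ #|A| = 1 :> R).
have h : (#|A|%:R : R) != 0 by rewrite pnatr_eq0 -lt0n.
by rewrite -[RHS](mulVf h) mulr_natr.
Qed.

Definition E := [set Fz v phi | phi in @Phi R A].

Lemma hasE : llull v -> (0 < #|A|)%N -> has_sup E.
Proof.
move=> hv hA; split.
  by exists (Fz v uni); exists uni => //; exact: Phi_uni.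
by exists 1 => _ [p hp <-]; exact: Fz_le1.
Qed.

Lemma Fz_le_sup (p : A -> R) : llull v -> (0 < #|A|)%N -> Phi p -> Fz v p <= sup E.
Proof.
move=> hv hA hp; apply: sup_upper_bound; first exact: hasE.
by exists p.
Qed.

Lemma max_exists : llull v -> (0 < #|A|)%N -> exists phis, maximizing_seq v phis.
Proof.
move=> hv hA.
have H : forall n : nat, exists p, Phi p /\ sup E - (n.+1%:R)^-1 < Fz v p.
  move=> n; have [e [p hp <-] he] := sup_adherent (@harmonic_gt0 R n) (hasE hv hA).
  by exists p.
have [phis Hp] := choice H.
exists phis; split; first by move=> n; case: (Hp n).
apply: (@squeeze_cvgr _ _ _ R (fun n => sup E - (n.+1%:R)^-1) (fun _ => sup E)).
- apply: nearW => n; case: (Hp n) => hp lt.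
  by rewrite (ltW lt) Fz_le_sup.
- have := cvgB (@cvg_cst R^o (sup E) nat \oo _) (@cvg_harmonic R); rewrite subr0.
  exact.
- exact: (@cvg_cst R^o (sup E) nat \oo _).
Qed.

Lemma max_transfer (phis qs : nat -> A -> R) : llull v -> (0 < #|A|)%N -> maximizing_seq v phis ->
  (forall n, Phi (qs n)) -> (forall n, Fz v (phis n) <= Fz v (qs n)) ->
  maximizing_seq v qs.
Proof.
move=> hv hA [hp hc] hq hle; split => //.
apply: (@squeeze_cvgr _ _ _ R (fun n => Fz v (phis n)) (fun _ => sup E)).
- apply: nearW => n; by rewrite hle Fz_le_sup.
- exact: hc.
- exact: (@cvg_cst R^o (sup E) nat \oo _).
Qed.

Definition nrm (q : A -> R) := fun x => (\sum_y q y)^-1 * q x.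

Lemma sum_pos (q : A -> R) (x0 : A) : (forall x, 0 < q x) -> 0 < \sum_y q y.
Proof.
move=> qP; rewrite (bigD1 x0) //=; apply: ltr_wpDr; last exact: qP.
by apply: sumr_ge0 => y _; apply: ltW.
Qed.

Lemma Phi_nrm (q : A -> R) (x0 : A) : (forall x, 0 < q x) -> Phi (nrm q).
Proof.
move=> qP; have s0 := sum_pos x0 qP; split.
  by move=> x; rewrite /nrm mulr_gt0 ?invr_gt0.
by rewrite /nrm -mulr_sumr mulVf // gt_eqF.
Qed.

Lemma S_nrm (q : A -> R) (x0 : A) : (forall x, 0 < q x) -> S (nrm q) = S q.
Proof.
move=> qP; apply: S_scale => //; rewrite invr_gt0; exact: sum_pos.
Qed.

Lemma Fz_le_S (p q : A -> R) : (forall x, 0 < p x) -> (forall x, 0 < q x) ->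
  S p <= S q -> Fz v p <= Fz v q.
Proof.
move=> pP qP le; rewrite !Fz_exp // ler_expR ler_pM2r //.
Qed.

Lemma rho_diff rk a a' : clc_order v rk -> nat_of_ord (rk a') = (rk a).+1 ->
  \sum_(y | y != a) v a y - \sum_(y | y != a') v a' y =
  (v a a' - v a' a) + \sum_(z | (z != a) && (z != a')) (v a z - v a' z).
Proof.
move=> hc ha; have aa' := consec_ne hc ha.
rewrite (bigD1 a') /=; last by rewrite eq_sym.
rewrite [X in _ - X](bigD1 a) //= sumrB.
rewrite [X in _ - (_ + X)](eq_bigl (fun z => (z != a) && (z != a'))); last first.
  by move=> z; rewrite andbC.
ring.
Qed.

Lemma d_ge0 rk a a' z : clc_order v rk -> nat_of_ord (rk a') = (rk a).+1 ->
  (z != a) && (z != a') -> 0 <= v a z - v a' z.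
Proof.
move=> hc ha /andP[za za']; have [h _] := consec_facts hc ha za za'.
by rewrite subr_ge0.
Qed.

Lemma m_ge0 rk a a' : clc_order v rk -> nat_of_ord (rk a') = (rk a).+1 ->
  0 <= v a a' - v a' a.
Proof.
move=> hc ha; have [_ [h1 _]] := hc; rewrite subr_ge0; apply: h1; by rewrite ha.
Qed.

Lemma Nm1_gt0 : (2 <= #|A|)%N -> 0 < (#|A|.-1%:R : R).
Proof. by move=> h; rewrite ltr0n; case: #|A| h => [|[|n]]. Qed.

Lemma rho_sub rk a a' : (2 <= #|A|)%N -> clc_order v rk ->
  nat_of_ord (rk a') = (rk a).+1 ->
  rho v a - rho v a' = (#|A|.-1%:R)^-1 *
  ((v a a' - v a' a) + \sum_(z | (z != a) && (z != a')) (v a z - v a' z)).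
Proof. by move=> h2 hc ha; rewrite /rho -mulrBr (rho_diff hc ha). Qed.

Lemma rho_ge rk a a' : (2 <= #|A|)%N -> clc_order v rk ->
  nat_of_ord (rk a') = (rk a).+1 -> rho v a' <= rho v a.
Proof.
move=> h2 hc ha; rewrite -subr_ge0 (rho_sub h2 hc ha).
apply: mulr_ge0; first by rewrite invr_ge0 ltW // Nm1_gt0.
apply: addr_ge0; first exact: m_ge0 hc ha.
by apply: sumr_ge0 => z; apply: d_ge0 hc ha.
Qed.

Lemma rho_eq rk a a' : (2 <= #|A|)%N -> clc_order v rk ->
  nat_of_ord (rk a') = (rk a).+1 -> rho v a = rho v a' ->
  v a a' = v a' a /\
  (forall z, z != a -> z != a' -> v a z = v a' z /\ v z a = v z a').
Proof.
move=> h2 hc ha e.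
have : (#|A|.-1%:R)^-1 *
  ((v a a' - v a' a) + \sum_(z | (z != a) && (z != a')) (v a z - v a' z)) = 0.
  by rewrite -(rho_sub h2 hc ha) e subrr.
move/eqP; rewrite mulf_eq0 invr_eq0 (gt_eqF (Nm1_gt0 h2)) /= => /eqP.
have m0 := m_ge0 hc ha.
have s0 : 0 <= \sum_(z | (z != a) && (z != a')) (v a z - v a' z).
  by apply: sumr_ge0 => z; apply: d_ge0 hc ha.
move=> H.
have em : v a a' - v a' a = 0 by lra.
have es : \sum_(z | (z != a) && (z != a')) (v a z - v a' z) = 0 by lra.
have ez := psumr_eq0P (fun z => d_ge0 hc ha (z := z)) es.
split; first by apply/eqP; rewrite -subr_eq0 em.
move=> z za za'; have dz : v a z - v a' z = 0 by apply: ez; rewrite za za'.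
have [_ [_ [_ [_ h4]]]] := hc.
have [e0 e1] := h4 a a' z ha za za'.
move: e0 e1; rewrite /margin em /turnout => e0 e1.
split; lra.
Qed.

Lemma kap_pos rk a a' : (2 <= #|A|)%N -> clc_order v rk ->
  nat_of_ord (rk a') = (rk a).+1 -> rho v a' < rho v a -> 0 < kap a a'.
Proof.
move=> h2 hc ha lt.
have m0 := m_ge0 hc ha.
have [_ [_ [_ [_ h4]]]] := hc.
have dez : forall z, (z != a) && (z != a') ->
    0 <= (v a z - v a' z) - (turnout v a z - turnout v a' z).
  move=> z /andP[za za']; have [_ h] := consec_facts hc ha za za'.
  rewrite /turnout; lra.
have [mp|m00] := ltP 0 (v a a' - v a' a).
  rewrite /kap; have := sumr_ge0 (index_enum A) dez; lra.
have em : v a a' - v a' a = 0 by apply/eqP; rewrite eq_le m00 m0.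
rewrite /kap em add0r.
have -> : \sum_(z | (z != a) && (z != a'))
            ((v a z - v a' z) - (turnout v a z - turnout v a' z)) =
          \sum_(z | (z != a) && (z != a')) (v a z - v a' z).
  apply: eq_bigr => z /andP[za za']; have [e0 e1] := h4 a a' z ha za za'.
  rewrite /margin em in e1; have -> : turnout v a z - turnout v a' z = 0 by lra.
  by rewrite subr0.
move: lt; rewrite -subr_gt0 (rho_sub h2 hc ha) em add0r.
rewrite pmulr_rgt0 // invr_gt0; exact: Nm1_gt0.
Qed.

Lemma phi_consec_ge rk a a' (phi : A -> R) : llull v -> (0 < #|A|)%N ->
  clc_order v rk -> nat_of_ord (rk a') = (rk a).+1 -> strengths v phi ->
  phi a' <= phi a.
Proof.
move=> hv hA hc ha hs.
have [phis hm] := max_exists hv hA.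
pose qs n := if phis n a < phis n a' then swp a a' (phis n) else phis n.
have hq : maximizing_seq v qs.
  apply: (max_transfer hv hA hm).
  - move=> n; rewrite /qs; case: ifP => _; [apply: Phi_swp|]; exact: (proj1 hm n).
  - move=> n; rewrite /qs; case: ifP => lt; last exact: lexx.
    apply: Fz_le_S; first exact: Phi_pos (proj1 hm n).
      exact: Phi_pos (Phi_swp a a' (proj1 hm n)).
    exact: swp_ge hv hc ha (Phi_pos (proj1 hm n)) lt.
have c1 := hs qs hq a; have c2 := hs qs hq a'.
have c := cvgB c1 c2.
rewrite -subr_ge0; apply: (@lim_ge0 R (fun n => qs n a - qs n a') (phi a - phi a')); last exact: c.
move=> n.
rewrite /qs; case: ifP => lt.
  by rewrite /swp tpermL tpermR subr_ge0 ltW.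
by rewrite subr_ge0 leNgt lt.
Qed.

Lemma phi_consec_eq rk a a' (phi : A -> R) : llull v -> (0 < #|A|)%N ->
  clc_order v rk -> nat_of_ord (rk a') = (rk a).+1 -> strengths v phi ->
  v a a' = v a' a ->
  (forall z, z != a -> z != a' -> v a z = v a' z /\ v z a = v z a') ->
  phi a = phi a'.
Proof.
move=> hv hA hc ha hs e1 e2.
have [phis hm] := max_exists hv hA.
pose qs n := swp a a' (phis n).
have hq : maximizing_seq v qs.
  apply: (max_transfer hv hA hm).
  - move=> n; apply: Phi_swp; exact: (proj1 hm n).
  - move=> n; apply: Fz_le_S; first exact: Phi_pos (proj1 hm n).
      exact: Phi_pos (Phi_swp a a' (proj1 hm n)).
    by rewrite (swp_eq _ hc ha e1 e2).
have c1 := hs qs hq a; have c2 := hs phis hm a'.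
apply: (lim_uniq c1); move: c2; apply: cvg_trans; apply: near_eq_cvg.
by apply: nearW => n; rewrite /qs /swp tpermL.
Qed.

Lemma phi_ge0 (phi : A -> R) x : llull v -> (0 < #|A|)%N -> strengths v phi ->
  0 <= phi x.
Proof.
move=> hv hA hs; have [phis hm] := max_exists hv hA.
apply: (@lim_ge0 R (fun n => phis n x)); last exact: hs phis hm x.
by move=> n; apply: ltW; apply: Phi_pos (proj1 hm n) x.
Qed.

Lemma phi_consec_key rk a a' (phi : A -> R) : llull v -> (0 < #|A|)%N ->
  clc_order v rk -> nat_of_ord (rk a') = (rk a).+1 -> strengths v phi ->
  0 < kap a a' -> phi a = phi a' -> phi a = 0.
Proof.
move=> hv hA hc ha hs k0 e.
have [phis hm] := max_exists hv hA.
have g0 : 0 <= phi a by exact: phi_ge0.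
case: (eqVneq (phi a) 0) => // ne.
have pa : 0 < phi a by rewrite lt_neqAle eq_sym ne g0.
set mu := 1 + kap a a' / (#|A|.+1)%:R.
have mu1 : 1 < mu by rewrite /mu ltrDl divr_gt0 // ltr0n.
have m0 : 0 < mu by apply: lt_trans mu1.
have cl : (fun n => phis n a - mu * phis n a') @ \oo --> (phi a - mu * phi a' : R^o).
  apply: cvgB; first exact: hs phis hm a.
  exact: cvgMl_tmp (hs phis hm a').
have neg : phi a - mu * phi a' < 0 by rewrite -e; nra.
have := @cvgr_lt R nat _ _ _ _ cl 0 neg; case => N _ HN.
pose ps n := phis (n + N)%N.
have hps : maximizing_seq v ps.
  split; first by move=> n; exact: (proj1 hm).
  have h := proj2 hm; rewrite -(@cvg_shiftn N R^o (fun n => Fz v (phis n))) in h; exact: h.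
have psP : forall n x, 0 < ps n x by move=> n; apply: Phi_pos (proj1 hps n).
have shP : forall n x, 0 < shf a a' mu (ps n) x.
  move=> n x; rewrite /shf; case: ifP => _; first by rewrite mulr_gt0.
  by case: ifP => _ //; rewrite divr_gt0.
pose qs n := nrm (shf a a' mu (ps n)).
have hq : maximizing_seq v qs.
  apply: (max_transfer hv hA hps).
  - move=> n; exact: Phi_nrm a (shP n).
  - move=> n; apply: Fz_le_S; first exact: psP.
      exact: Phi_pos (Phi_nrm a (shP n)).
    rewrite (S_nrm a (shP n)); apply: (shf_ge hv hc ha) => //.
    have := HN (n + N)%N (leq_addl _ _); rewrite /ps /= -/mu; lra.
have L1 : (fun n => qs n a * ps n a') @ \oo --> (phi a * phi a' : R^o).
  exact: cvgM (hs qs hq a) (hs ps hps a').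
have L2 : (fun n => qs n a * ps n a') @ \oo --> (mu ^+ 2 * (phi a * phi a') : R^o).
  have L3 := cvgMl_tmp (a := mu ^+ 2) (cvgM (hs ps hps a) (hs qs hq a')).
  have Eqf : (fun n => qs n a * ps n a') = (fun n => mu ^+ 2 * (ps n a * qs n a')).
    apply: funext => n.
    rewrite /qs /nrm /shf eqxx eq_sym (negbTE (consec_ne hc ha)) eqxx.
    field; rewrite gt_eqF //= gt_eqF //; exact: (sum_pos a (shP n)).
  rewrite Eqf; exact: L3.
have E1 := lim_uniq L1 L2.
rewrite -e in E1.
have : (mu ^+ 2 - 1) * (phi a * phi a) = 0 by rewrite mulrBl mul1r -E1 subrr.
move/eqP; rewrite mulf_eq0 mulf_eq0 (gt_eqF pa) orbF => /eqP; nra.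
Qed.
End Main.

Lemma chain (R : realType) (F Rh : nat -> R) (N : nat) :
 (forall k, (k.+1 < N)%N -> F k.+1 <= F k) ->
 (forall k, (k.+1 < N)%N -> Rh k.+1 <= Rh k) ->
 (forall k, (k.+1 < N)%N -> Rh k = Rh k.+1 -> F k = F k.+1) ->
 (forall k, (k.+1 < N)%N -> Rh k.+1 < Rh k -> F k = F k.+1 -> F k = 0) ->
 forall i j, (i < N)%N -> (j < N)%N ->
 (F j < F i -> Rh j < Rh i) /\ (Rh j < Rh i -> F j < F i \/ (F i = 0 /\ F j = 0)).
Proof.
move=> F1 R1 E1 K1.
have G : forall i d, (i + d < N)%N -> [/\ F (i + d)%N <= F i, Rh (i + d)%N <= Rh i,
    (Rh (i + d)%N = Rh i -> F (i + d)%N = F i) &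
    (F (i + d)%N = F i -> Rh (i + d)%N < Rh i -> F i = 0)].
  move=> i; elim => [|d IH] h.
    rewrite addn0; split => //; by move=> _; rewrite ltxx.
  rewrite addnS in h *.
  have hk : (i + d < N)%N by apply: ltn_trans h.
  have [a1 a2 a3 a4] := IH hk.
  have f1 := F1 _ h; have r1 := R1 _ h.
  split.
  - exact: le_trans f1 a1.
  - exact: le_trans r1 a2.
  - move=> e.
    have e1 : Rh (i + d)%N = Rh i by apply/eqP; rewrite eq_le a2 -e r1.
    rewrite -a3 //; symmetry; apply: E1 => //; by rewrite e1 e.
  - move=> e lt.
    have e1 : F (i + d)%N = F i by apply/eqP; rewrite eq_le a1 -e f1.
    have [lt2|ge2] := ltP (Rh (i + d)%N) (Rh i); first exact: a4.
    have e2 : Rh (i + d)%N = Rh i by apply/eqP; rewrite eq_le a2 ge2.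
    rewrite -e1; apply: K1 => //; first by rewrite e2.
    by rewrite e1.
move=> i j hi hj.
case: (leqP j i) => hij.
  have ei : i = (j + (i - j))%N by rewrite subnKC.
  have hh : (j + (i - j) < N)%N by rewrite -ei.
  have [a1 a2 _ _] := G j (i - j)%N hh.
  rewrite -ei in a1 a2.
  split => h; [have := lt_le_trans h a1 | have := lt_le_trans h a2]; by rewrite ltxx.
have ej : j = (i + (j - i))%N by rewrite subnKC // ltnW.
have hh : (i + (j - i) < N)%N by rewrite -ej.
have [a1 a2 a3 a4] := G i (j - i)%N hh.
rewrite -ej in a1 a2 a3 a4.
split.
  move=> h; rewrite lt_neqAle a2 andbT; apply/negP => /eqP e.
  by move: h; rewrite a3 // ltxx.
move=> h; have [lt|ge] := ltP (F j) (F i); first by left.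
right; have e : F j = F i by apply/eqP; rewrite eq_le a1 ge.
have z := a4 e h; split => //; by rewrite e.
Qed.

Local Close Scope classical_set_scope.
Unset Implicit Arguments. Set Strict Implicit. Set Printing Implicit Defensive.

Theorem theorem3p5 (R : realType) (A : finType) (v : A -> A -> R)
  (phi : A -> R) :
  (2 <= #|A|)%N ->
  llull v -> has_CLC v -> nonvanishing v ->
  strengths v phi ->
  forall x y : A,
    (phi y < phi x -> rho v y < rho v x) /\
    (rho v y < rho v x -> phi y < phi x \/ (phi x = 0 /\ phi y = 0)).
Proof.
move=> h2 hv [rk hc] _ hs x y.
have hA : (0 < #|A|)%N by apply: leq_trans h2.
have [inj _] := hc.
have bij : bijective rk by apply: inj_card_bij => //; rewrite card_ord.
case: bij => g rkK gK.
pose o0 := rk x.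
pose elt k := g (insubd o0 k).
have valE : forall k, (k < #|A|)%N -> val (insubd o0 k) = k.
  by move=> k hk; rewrite val_insubd hk.
have consec : forall k, (k.+1 < #|A|)%N ->
    nat_of_ord (rk (elt k.+1)) = (rk (elt k)).+1.
  by move=> k hk; rewrite /elt !gK !valE // ltnW.
have eltE : forall z, elt (rk z) = z.
  move=> z; rewrite /elt.
  have -> : insubd o0 (rk z) = rk z by apply: val_inj; rewrite valE.
  exact: rkK.
have := @chain R (fun k => phi (elt k)) (fun k => rho v (elt k)) #|A|.
move=> /(_ _ _ _ _ (rk x) (rk y) (ltn_ord _) (ltn_ord _)); rewrite /= !eltE; apply.
- move=> k hk; exact: phi_consec_ge hv hA hc (consec k hk) hs.
- move=> k hk; exact: rho_ge h2 hc (consec k hk).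
- move=> k hk e; have [e1 e2] := rho_eq h2 hc (consec k hk) e.
  exact: phi_consec_eq hv hA hc (consec k hk) hs e1 e2.
- move=> k hk lt e.
  exact: phi_consec_key hv hA hc (consec k hk) hs (kap_pos h2 hc (consec k hk) lt) e.
Qed.
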